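(* Let $\beta\in\mathbb{N}=\{0,1,2,\dots\}$ and $\alpha\in\mathbb{D}\setminus\{0\}$. Let $\phi_\alpha(z)=\dfrac{\alpha-z}{1-\overline{\alpha}z}$ and, for each non-negative integer $n$, let $v_n:=C_{\phi_\alpha}^*z^n$, where $C_{\phi_\alpha}f=f\circ\phi_\alpha$ acts on $A^2_\beta$ and $^*$ denotes the adjoint in $A^2_\beta$. Then $\langle v_n,v_m\rangle=0$ whenever $|n-m|\ge\beta+3$.
   Context: $\mathbb{D}$ is the open unit disc. For $\beta>-1$, $A^2_\beta$ is the Hilbert space of analytic functions $f(z)=\sum_{n\ge0}\widehat f(n)z^n$ on $\mathbb{D}$ with inner product $\langle f,g\rangle=\sum_{n\ge0}\frac{n!\,\Gamma(2+\beta)}{\Gamma(n+2+\beta)}\widehat f(n)\overline{\widehat g(n)}$ (equivalently the $L^2$ inner product with respect to $(\beta+1)(1-|z|^2)^\beta dA(z)$). *)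

(* Defs.v *)
From Stdlib Require Import Reals.
From Coquelicot Require Import Coquelicot.
Open Scope R_scope.

(* Sum of a complex series, computed componentwise (Coquelicot's Series is real). *)
Definition CSeries (u : nat -> C) : C :=
  (Series (fun k => Re (u k)), Series (fun k => Im (u k))).

(* Weight n! Gamma(2+beta) / Gamma(n+2+beta) for beta in N:
   = n! (beta+1)! / (n+beta+1)!. *)
Definition wt (beta n : nat) : R :=
  INR (Factorial.fact n) * INR (Factorial.fact (beta + 1)) / INR (Factorial.fact (n + beta + 1)).

(* An element of A^2_beta, represented by its Taylor coefficient sequence. *)
Definition inA2 (beta : nat) (a : nat -> C) : Prop :=
  ex_series (fun n => wt beta n * (Cmod (a n)) ^ 2).

Definition ip (beta : nat) (a b : nat -> C) : C :=
  CSeries (fun n => Cmult (RtoC (wt beta n)) (Cmult (a n) (Cconj (b n)))).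

Definition eval (a : nat -> C) (z : C) : C :=
  CSeries (fun n => Cmult (a n) (@pow_n C_Ring z n)).

Definition mono (n : nat) : nat -> C :=
  fun k => if Nat.eqb k n then RtoC 1 else RtoC 0.

Definition phi (alpha z : C) : C :=
  Cdiv (Cminus alpha z) (Cminus (RtoC 1) (Cmult (Cconj alpha) z)).

(* v is C_{phi_alpha}^* h in A^2_beta: <f, v> = <C_phi f, h> for all f in A^2_beta,
   where C_phi f is the element g of A^2_beta with g = f o phi_alpha on the disc. *)
Definition is_adj_comp (beta : nat) (alpha : C) (h v : nat -> C) : Prop :=
  inA2 beta v /\
  forall f g : nat -> C, inA2 beta f -> inA2 beta g ->
    (forall z : C, Cmod z < 1 -> eval g z = eval f (phi alpha z)) ->
    ip beta f v = ip beta g h.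

(* Main.v *)
Require Import Defs.
From Stdlib Require Import Reals Lra Lia.
From Coquelicot Require Import Coquelicot.
Open Scope R_scope.

Definition D (k j : nat) : R := Binomial.C (j + k) j.

Lemma fact_pos n : 0 < INR (Factorial.fact n).
Proof. apply lt_0_INR. apply Factorial.lt_O_fact. Qed.

Lemma D_pos k j : 0 < D k j.
Proof.
  unfold D, Binomial.C. pose proof (fact_pos (j+k)). pose proof (fact_pos j).
  pose proof (fact_pos (j+k-j)).
  apply Rdiv_lt_0_compat; auto. apply Rmult_lt_0_compat; auto.
Qed.

Lemma D_0r k : D k 0 = 1.
Proof. unfold D, Binomial.C. simpl. replace (k - 0)%nat with k by lia.
  pose proof (fact_pos k). field. lra. Qed.

Lemma D_0l j : D 0 j = 1.
Proof. unfold D, Binomial.C. replace (j + 0 - j)%nat with 0%nat by lia.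
  replace (j+0)%nat with j by lia. simpl. pose proof (fact_pos j). field. lra. Qed.

Lemma D_rec k j : D (S k) (S j) = D (S k) j + D k (S j).
Proof.
  unfold D. replace (S j + S k)%nat with (S (j + S k)) by lia.
  replace (S j + k)%nat with (j + S k)%nat by lia.
  rewrite <- Binomial.pascal by lia. reflexivity.
Qed.

Lemma wt_D beta j : wt beta j * D (beta + 1) j = 1.
Proof.
  unfold wt, D, Binomial.C.
  replace (j + (beta + 1) - j)%nat with (beta + 1)%nat by lia.
  replace (j + (beta + 1))%nat with (j + beta + 1)%nat by lia.
  pose proof (fact_pos j). pose proof (fact_pos (beta+1)). pose proof (fact_pos (j+beta+1)).
  field. lra.
Qed.

Lemma wt_pos beta j : 0 < wt beta j.
Proof. unfold wt. pose proof (fact_pos j). pose proof (fact_pos (beta+1)). pose proof (fact_pos (j+beta+1)).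
  apply Rdiv_lt_0_compat; auto. apply Rmult_lt_0_compat; auto. Qed.

Lemma wt_S beta j : wt beta (S j) <= wt beta j.
Proof.
  assert (E : wt beta (S j) = wt beta j * (INR (S j) / INR (S (j + beta + 1)))).
  { unfold wt. replace (S j + beta + 1)%nat with (S (j + beta + 1)) by lia.
    rewrite !fact_simpl, !mult_INR.
    pose proof (fact_pos j). pose proof (fact_pos (beta+1)). pose proof (fact_pos (j+beta+1)).
    pose proof (lt_0_INR (S (j+beta+1)) ltac:(lia)).
    field. lra. }
  rewrite E. pose proof (wt_pos beta j).
  assert (INR (S j) <= INR (S (j + beta + 1))) by (apply le_INR; lia).
  pose proof (lt_0_INR (S (j+beta+1)) ltac:(lia)).
  assert (INR (S j) / INR (S (j + beta + 1)) <= 1).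
  { apply Rle_div_l; lra. }
  pose proof (pos_INR (S j)).
  assert (0 <= INR (S j) / INR (S (j + beta + 1))) by (apply Rdiv_le_0_compat; lra).
  nra.
Qed.

Lemma psum_real k r J :
  (1 - r) * sum_n (fun j => D (S k) j * r ^ j) J =
  sum_n (fun j => D k j * r ^ j) J - D (S k) J * r ^ (S J).
Proof.
  induction J.
  - rewrite !sum_O. rewrite !D_0r. simpl. ring.
  - rewrite !sum_Sn. change plus with Rplus.
    rewrite Rmult_plus_distr_l, IHJ, D_rec. simpl. ring.
Qed.

Lemma series_real k r : 0 <= r < 1 -> ex_series (fun j => D k j * r ^ j).
Proof.
  intros Hr. induction k.
  - apply (ex_series_ext (fun j => r ^ j)).
    + intro j. rewrite D_0l. simpl. rewrite Rmult_1_l. reflexivity.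
    + apply ex_series_geom. rewrite Rabs_pos_eq; lra.
  - destruct IHk as [L HL].
    assert (Hinc : forall (a : nat -> R), (forall j, 0 <= a j) -> forall n, sum_n a n <= sum_n a (S n)).
    { intros a Ha n. rewrite sum_Sn. change plus with Rplus. specialize (Ha (S n)). lra. }
    assert (Hnn : forall k j, 0 <= D k j * r ^ j).
    { intros. apply Rmult_le_pos. left; apply D_pos. apply pow_le; lra. }
    assert (Hb : forall n, sum_n (fun j => D k j * r ^ j) n <= L).
    { apply is_lim_seq_incr_compare. exact HL. apply Hinc. auto. }
    destruct (ex_finite_lim_seq_incr (sum_n (fun j => D (S k) j * r ^ j)) (L / (1 - r))) as [l Hl].
    + apply Hinc; auto.
    + intro n. apply Rle_div_r. lra. rewrite Rmult_comm, psum_real.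
      specialize (Hb n).
      assert (0 <= D (S k) n * r ^ S n) by (apply Rmult_le_pos; [left; apply D_pos | apply pow_le; lra]).
      lra.
    + exists l. exact Hl.
Qed.

Definition Cis (a : nat -> C) (l : C) := @is_series C_AbsRing C_NormedModule a l.

Lemma re_sum (a : nat -> C) n : sum_n (fun k => Re (a k)) n = Re (sum_n a n).
Proof. induction n. rewrite !sum_O; reflexivity. rewrite !sum_Sn, IHn. reflexivity. Qed.
Lemma im_sum (a : nat -> C) n : sum_n (fun k => Im (a k)) n = Im (sum_n a n).
Proof. induction n. rewrite !sum_O; reflexivity. rewrite !sum_Sn, IHn. reflexivity. Qed.

Lemma Cis_ball a l : Cis a l -> forall eps : posreal, eventually (fun n => ball l eps (sum_n a n)).
Proof.
  intros H. exact (proj1 (@filterlim_locally _ C_UniformSpace _ (@filter_filter _ _ eventually_filter) _ _) H).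
Qed.

Lemma CSeries_is a l : Cis a l -> CSeries a = l.
Proof.
  intros H. unfold CSeries. pose proof (Cis_ball a l H) as HB.
  assert (H1 : is_series (fun k => Re (a k)) (Re l)).
  { unfold is_series. apply (filterlim_ext (fun n => Re (sum_n a n))).
    intro; symmetry; apply re_sum.
    apply filterlim_locally. intros eps.
    specialize (HB eps).
    revert HB. apply filter_imp. intros x [Hx _]. exact Hx. }
  assert (H2 : is_series (fun k => Im (a k)) (Im l)).
  { unfold is_series. apply (filterlim_ext (fun n => Im (sum_n a n))).
    intro; symmetry; apply im_sum.
    apply filterlim_locally. intros eps.
    specialize (HB eps).
    revert HB. apply filter_imp. intros x [_ Hx]. exact Hx. }
  rewrite (is_series_unique _ _ H1), (is_series_unique _ _ H2).
  destruct l; reflexivity.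
Qed.

Lemma sum_n_stable {G : AbelianMonoid} (a : nat -> G) M n :
  (forall j, (M < j)%nat -> a j = zero) -> (M <= n)%nat -> sum_n a n = sum_n a M.
Proof.
  intros H Hn. induction n.
  - replace M with 0%nat by lia. reflexivity.
  - destruct (Nat.eq_dec M (S n)) as [->|Hne]. reflexivity.
    rewrite sum_Sn, IHn by lia. rewrite H by lia. apply plus_zero_r.
Qed.

Lemma fin_is {K : AbsRing} {V : NormedModule K} (a : nat -> V) M :
  (forall j, (M < j)%nat -> a j = zero) -> is_series a (sum_n a M).
Proof.
  intros H. unfold is_series. apply filterlim_locally. intros eps.
  exists M. intros n Hn. rewrite (sum_n_stable a M n H Hn). apply ball_center.
Qed.

Lemma sum_n_single {G : AbelianMonoid} (a : nat -> G) m :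
  (forall j, j <> m -> a j = zero) -> sum_n a m = a m.
Proof.
  intros H.
  assert (H0 : forall n, (n < m)%nat -> sum_n a n = zero).
  { induction n; intros Hn. rewrite sum_O. apply H. lia.
    rewrite sum_Sn, IHn by lia. rewrite H by lia. apply plus_zero_r. }
  destruct m. apply sum_O. rewrite sum_Sn, H0 by lia. apply plus_zero_l.
Qed.

Lemma single_is (a : nat -> C) m : (forall j, j <> m -> a j = RtoC 0) -> Cis a (a m).
Proof.
  intros H. rewrite <- (sum_n_single a m H). apply (@fin_is C_AbsRing C_NormedModule).
  intros j Hj. apply H. lia.
Qed.

Lemma CSeries_conj (u : nat -> C) : CSeries (fun n => Cconj (u n)) = Cconj (CSeries u).
Proof.
  unfold CSeries, Cconj. simpl. f_equal.
  rewrite <- Series_opp. apply Series_ext. intro n. reflexivity.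
Qed.

Definition dif (e : nat -> C) (j : nat) : C :=
  match j with O => e O | S j' => Cminus (e (S j')) (e j') end.

Lemma sum_dif e J : sum_n (dif e) J = e J.
Proof.
  induction J. rewrite sum_O. reflexivity.
  rewrite sum_Sn, IHJ. simpl. change plus with Cplus. ring.
Qed.

Lemma tele e : filterlim e eventually (locally (RtoC 0)) -> Cis (dif e) (RtoC 0).
Proof.
  intros H. unfold Cis, is_series. apply (filterlim_ext e). intro; symmetry; apply sum_dif. exact H.
Qed.

Lemma lim_norm0 (e : nat -> C) (b : nat -> R) :
  (forall J, Cmod (e J) <= b J) -> is_lim_seq b 0 -> filterlim e eventually (locally (RtoC 0)).
Proof.
  intros Hb Hl. apply (proj2 (@filterlim_locally_ball_norm C_AbsRing _ C_NormedModule _ (@filter_filter _ _ eventually_filter) _ _)). intros eps.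
  apply is_lim_seq_spec in Hl. specialize (Hl eps). revert Hl. apply filter_imp.
  intros n Hn. unfold ball_norm. change (Cmod (Cminus (e n) (RtoC 0)) < eps). replace (Cminus (e n) (RtoC 0)) with (e n) by ring. replace (minus (e n) (RtoC 0)) with (e n) by (unfold minus; simpl; change plus with Cplus; change opp with Copp; ring).
  specialize (Hb n). rewrite Rminus_0_r in Hn. pose proof (Rle_abs (b n)). lra.
Qed.

Lemma Cis_ext (a b : nat -> C) l : (forall n, a n = b n) -> Cis a l -> Cis b l.
Proof. intros H. apply is_series_ext. exact H. Qed.

Lemma step (A B e : nat -> C) x l :
  x <> RtoC 1 -> Cis A l ->
  (forall j, Cmult (Cminus (RtoC 1) x) (B j) = Cminus (A j) (dif e j)) ->
  filterlim e eventually (locally (RtoC 0)) -> Cis B (Cdiv l (Cminus (RtoC 1) x)).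
Proof.
  intros Hx HA HB He.
  assert (Hx' : Cminus (RtoC 1) x <> RtoC 0).
  { intro E. apply Hx. rewrite <- (Cplus_0_r x), <- E. ring. }
  pose proof (is_series_minus _ _ _ _ HA (tele e He)) as H1.
  pose proof (is_series_scal (Cinv (Cminus (RtoC 1) x)) _ _ H1) as H2.
  assert (E : Cdiv l (Cminus (RtoC 1) x) = Cmult (Cinv (Cminus (RtoC 1) x)) (Cplus l (Copp (RtoC 0)))).
  { field. exact Hx'. }
  rewrite E.
  apply (Cis_ext (fun n => Cmult (Cinv (Cminus (RtoC 1) x)) (Cplus (A n) (Copp (dif e n))))).
  - intro n. specialize (HB n). unfold Cminus at 2 in HB. rewrite <- HB. field. exact Hx'.
  - exact H2.
Qed.

Definition kseq (k : nat) (x : C) (j : nat) : C := Cmult (RtoC (D k j)) (Cpow x j).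

Lemma x_ne1 x : Cmod x < 1 -> x <> RtoC 1.
Proof. intros H E. subst. rewrite Cmod_1 in H. lra. Qed.

Lemma one_minus_nz x : Cmod x < 1 -> Cminus (RtoC 1) x <> RtoC 0.
Proof. intros H E. apply (x_ne1 x H). rewrite <- (Cplus_0_r x), <- E. ring. Qed.

Lemma e_lim k x : Cmod x < 1 ->
  filterlim (fun J => Cmult (RtoC (D k J)) (Cpow x (S J))) eventually (locally (RtoC 0)).
Proof.
  intros Hx. apply (lim_norm0 _ (fun J => D k J * Cmod x ^ J)).
  - intro J. rewrite Cmod_mult, Cmod_pow, Cmod_R, Rabs_pos_eq by (left; apply D_pos).
    apply Rmult_le_compat_l. left; apply D_pos. simpl.
    pose proof (Cmod_ge_0 x). pose proof (pow_le (Cmod x) J H).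
    nra.
  - apply ex_series_lim_0. apply series_real. split. apply Cmod_ge_0. exact Hx.
Qed.

Lemma kern k x : Cmod x < 1 -> Cis (kseq k x) (Cinv (Cpow (Cminus (RtoC 1) x) (S k))).
Proof.
  intros Hx. pose proof (one_minus_nz x Hx) as Hnz.
  induction k.
  - replace (Cinv (Cpow (Cminus (RtoC 1) x) 1)) with (Cdiv (RtoC 1) (Cminus (RtoC 1) x))
      by (simpl; field; exact Hnz).
    apply (step (mono 0) _ (fun J => Cmult (RtoC (D 0 J)) (Cpow x (S J)))).
    + apply x_ne1; exact Hx.
    + change (RtoC 1) with (mono 0 0). apply single_is. intros j Hj.
      unfold mono. destruct (Nat.eqb_spec j 0); [lia|reflexivity].
    + intro j. unfold kseq, mono. destruct j; simpl.
      * rewrite !D_0l. simpl. ring.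
      * rewrite !D_0l. ring.
    + apply e_lim; exact Hx.
  - replace (Cinv (Cpow (Cminus (RtoC 1) x) (S (S k)))) with
      (Cdiv (Cinv (Cpow (Cminus (RtoC 1) x) (S k))) (Cminus (RtoC 1) x)).
    2:{ rewrite (Cpow_S _ (S k)). field. split. apply Cpow_nz. exact Hnz. exact Hnz. }
    apply (step (kseq k x) _ (fun J => Cmult (RtoC (D (S k) J)) (Cpow x (S J)))).
    + apply x_ne1; exact Hx.
    + exact IHk.
    + intro j. unfold kseq. destruct j; simpl.
      * rewrite !D_0r. ring.
      * rewrite D_rec, RtoC_plus. ring.
    + apply e_lim; exact Hx.
Qed.

Definition Mop (g : C) (s : nat -> C) (j : nat) : C :=
  match j with O => s O | S j' => Cminus (s (S j')) (Cmult g (s j')) end.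

Definition iterM (g : C) (N : nat) (s : nat -> C) : nat -> C := Nat.iter N (Mop g) s.

Lemma Cis_scal c (a : nat -> C) l : Cis a l -> Cis (fun n => Cmult c (a n)) (Cmult c l).
Proof. intros H. exact (is_series_scal c a l H). Qed.

Lemma Cis_minus (a b : nat -> C) la lb : Cis a la -> Cis b lb ->
  Cis (fun n => Cminus (a n) (b n)) (Cminus la lb).
Proof. intros H1 H2. exact (is_series_minus a b la lb H1 H2). Qed.

Lemma Cis_unique (a : nat -> C) l l' : Cis a l -> Cis a l' -> l = l'.
Proof. intros H1 H2. rewrite <- (CSeries_is a l H1). apply CSeries_is; exact H2. Qed.

Lemma Mop_series g s z l :
  Cis (fun j => Cmult (s j) (Cpow z j)) l ->
  Cis (fun j => Cmult (Mop g s j) (Cpow z j)) (Cmult (Cminus (RtoC 1) (Cmult g z)) l).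
Proof.
  intros H.
  set (sh := fun j => match j with O => RtoC 0 | S j' => Cmult (s j') (Cpow z j') end).
  assert (Hsh : Cis sh l).
  { unfold Cis. apply (is_series_decr_1 sh l).
    match goal with |- is_series _ ?v => replace v with l end.
    exact H. simpl. change plus with Cplus. change opp with Copp. ring. }
  pose proof (Cis_minus _ _ _ _ H (Cis_scal (Cmult g z) _ _ Hsh)) as H2.
  replace (Cmult (Cminus (RtoC 1) (Cmult g z)) l) with (Cminus l (Cmult (Cmult g z) l)) by ring.
  refine (Cis_ext _ _ _ _ H2).
  intro n. destruct n; simpl; ring.
Qed.

Lemma iterM_series g N s z l :
  Cis (fun j => Cmult (s j) (Cpow z j)) l ->
  Cis (fun j => Cmult (iterM g N s j) (Cpow z j)) (Cmult (Cpow (Cminus (RtoC 1) (Cmult g z)) N) l).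
Proof.
  intros H. induction N.
  - simpl. replace (Cmult (RtoC 1) l) with l by ring. exact H.
  - replace (Cmult (Cpow (Cminus (RtoC 1) (Cmult g z)) (S N)) l) with
      (Cmult (Cminus (RtoC 1) (Cmult g z)) (Cmult (Cpow (Cminus (RtoC 1) (Cmult g z)) N) l))
      by (simpl; ring).
    apply Mop_series. exact IHN.
Qed.

Lemma Mop_ext g s t j : (forall i, s i = t i) -> Mop g s j = Mop g t j.
Proof. intros H. destruct j; simpl; rewrite ?H; reflexivity. Qed.

Lemma iterM_conj g N s j :
  Cconj (iterM g N s j) = iterM (Cconj g) N (fun i => Cconj (s i)) j.
Proof.
  revert j. induction N; intro j.
  - reflexivity.
  - simpl. change (Cconj (Mop g (iterM g N s) j) = Mop (Cconj g) (iterM (Cconj g) N (fun i => Cconj (s i))) j).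
    rewrite <- (Mop_ext _ _ _ j IHN).
    destruct j; simpl. reflexivity. rewrite Cminus_conj, Cmult_conj. reflexivity.
Qed.

Lemma Mop_supp g s L R :
  (forall j, (j < L)%nat \/ (R < j)%nat -> s j = RtoC 0) ->
  forall j, (j < L)%nat \/ (S R < j)%nat -> Mop g s j = RtoC 0.
Proof.
  intros H j Hj. destruct j; simpl.
  - apply H. lia.
  - rewrite !H by lia. ring.
Qed.

Lemma iterM_supp g N s L R :
  (forall j, (j < L)%nat \/ (R < j)%nat -> s j = RtoC 0) ->
  forall j, (j < L)%nat \/ (R + N < j)%nat -> iterM g N s j = RtoC 0.
Proof.
  intros H. induction N; intros j Hj.
  - apply H. lia.
  - simpl. change (Mop g (iterM g N s) j = RtoC 0).
    apply (Mop_supp g _ L (R + N)). exact IHN. lia.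
Qed.

Lemma sum_lin (a b : nat -> C) c n :
  sum_n (fun j => Cminus (a j) (Cmult c (b j))) n = Cminus (sum_n a n) (Cmult c (sum_n b n)).
Proof.
  induction n. rewrite !sum_O. reflexivity.
  rewrite !sum_Sn, IHn.
  change (Cplus (Cminus (sum_n a n) (Cmult c (sum_n b n))) (Cminus (a (S n)) (Cmult c (b (S n)))) = Cminus (Cplus (sum_n a n) (a (S n))) (Cmult c (Cplus (sum_n b n) (b (S n))))).
  ring.
Qed.

Lemma Csum_ext_loc (a b : nat -> C) N : (forall n, (n <= N)%nat -> a n = b n) -> sum_n a N = sum_n b N.
Proof. apply sum_n_ext_loc. Qed.

Definition pw g N := iterM g N (mono 0).

Lemma iterM_conv g N s n :
  iterM g N s n = sum_n (fun j => Cmult (pw g N (n - j)) (s j)) n.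
Proof.
  revert n. induction N; intro n.
  - simpl. unfold pw. simpl.
    rewrite (Csum_ext_loc _ (fun j => if Nat.eqb j n then s j else RtoC 0)).
    + rewrite sum_n_single. rewrite Nat.eqb_refl. reflexivity.
      intros j Hj. destruct (Nat.eqb_spec j n); [lia|reflexivity].
    + intros j Hj. unfold mono. destruct (Nat.eqb_spec j n).
      * subst. rewrite Nat.sub_diag. simpl. ring.
      * destruct (Nat.eqb_spec (n - j) 0). lia. ring.
  - simpl. change (Mop g (iterM g N s) n = sum_n (fun j => Cmult (Mop g (pw g N) (n - j)) (s j)) n).
    destruct n.
    + simpl. rewrite !sum_O, IHN, sum_O. simpl. reflexivity.
    + simpl (Mop g (iterM g N s) (S n)). rewrite !IHN.
      rewrite !sum_Sn. rewrite Nat.sub_diag. simpl (Mop g (pw g N) 0).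
      rewrite (Csum_ext_loc (fun j => Cmult (Mop g (pw g N) (S n - j)) (s j)) (fun j => Cminus (Cmult (pw g N (S n - j)) (s j)) (Cmult g (Cmult (pw g N (n - j)) (s j))))).
      * rewrite sum_lin. unfold plus; simpl. ring.
      * intros j Hj. replace (S n - j)%nat with (S (n - j)) by lia. simpl. ring.
Qed.

Lemma pow_n_Cpow (z : C) n : @pow_n C_Ring z n = Cpow z n.
Proof. induction n. reflexivity. simpl. rewrite <- IHn. reflexivity. Qed.

Lemma fin_A2 beta (a : nat -> C) M : (forall j, (M < j)%nat -> a j = RtoC 0) -> inA2 beta a.
Proof.
  intros H. exists (sum_n (fun n => wt beta n * (Cmod (a n)) ^ 2) M).
  apply (@fin_is R_AbsRing R_NormedModule). intros j Hj. rewrite H by exact Hj.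
  rewrite Cmod_0. change (@eq R (wt beta j * 0 ^ 2) 0). ring.
Qed.

Lemma scal_A2 beta c a : inA2 beta a -> inA2 beta (fun j => Cmult c (a j)).
Proof.
  intros [l H]. exists (Cmod c ^ 2 * l).
  apply (is_series_ext (fun n => scal (Cmod c ^ 2) (wt beta n * Cmod (a n) ^ 2))).
  - intro n. rewrite Cmod_mult. change scal with Rmult. simpl. ring.
  - apply (is_series_scal (Cmod c ^2) _ _ H).
Qed.

Lemma Mop_A2 beta g a : inA2 beta a -> inA2 beta (Mop g a).
Proof.
  intros Ha.
  set (t := fun n => wt beta n * Cmod (a n) ^ 2).
  set (sh := fun j => match j with O => 0 | S j' => t j' end).
  assert (Hsh : ex_series sh).
  { destruct Ha as [l Hl]. exists l. apply (is_series_decr_1 sh l).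
    match goal with |- is_series _ ?v => replace v with l end.
    exact Hl. exact (eq_sym (Rminus_0_r l)). }
  apply (@ex_series_le R_AbsRing R_CompleteNormedModule _ (fun n => 2 * t n + 2 * Cmod g ^ 2 * sh n)).
  - intro n. change norm with Rabs. simpl.
    assert (Ht : forall n, 0 <= t n).
    { intro. unfold t. apply Rmult_le_pos. left; apply wt_pos. apply pow2_ge_0. }
    rewrite Rabs_pos_eq by (apply Rmult_le_pos; [left; apply wt_pos|apply pow2_ge_0]).
    destruct n; simpl.
    + unfold t. simpl. pose proof (Ht 0%nat). unfold t in H. simpl in H. lra.
    + pose proof (wt_S beta n). pose proof (wt_pos beta n). pose proof (wt_pos beta (S n)).
      unfold t.
      pose proof (Cmod_triangle (a (S n)) (Copp (Cmult g (a n)))) as Htr.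
      rewrite Cmod_opp, Cmod_mult in Htr.
      pose proof (Cmod_ge_0 (Cminus (a (S n)) (Cmult g (a n)))).
      pose proof (Cmod_ge_0 (a (S n))). pose proof (Cmod_ge_0 (a n)). pose proof (Cmod_ge_0 g).
      set (p := Cmod (a (S n))) in *. set (q := Cmod (a n)) in *. set (r := Cmod g) in *.
      set (d := Cmod (Cminus (a (S n)) (Cmult g (a n)))) in *.
      assert (Hd : d <= p + r * q) by exact Htr.
      assert (0 <= r * q) by (apply Rmult_le_pos; lra).
      assert (d * d <= (p + r * q) * (p + r * q)) by (apply Rmult_le_compat; lra).
      assert (0 <= (p - r * q) * (p - r * q)) by (pose proof (Rle_0_sqr (p - r * q)); unfold Rsqr in *; lra).
      assert (d * d <= 2 * (p * p) + 2 * (r * r) * (q * q)) by nra.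
      assert (0 <= q * q) by nra.
      assert (wt beta (S n) * (q * q) <= wt beta n * (q * q)) by nra.
      nra.
  - apply (ex_series_plus (fun n => 2 * t n) (fun n => 2 * Cmod g ^ 2 * sh n)).
    + apply (ex_series_scal_l 2 t). exact Ha.
    + apply (ex_series_scal_l (2 * Cmod g ^ 2) sh). exact Hsh.
Qed.

Lemma iterM_A2 beta g N a : inA2 beta a -> inA2 beta (iterM g N a).
Proof.
  intros Ha. induction N. exact Ha. simpl. apply (Mop_A2 beta g _ IHN).
Qed.

Lemma Rex_ext (a b : nat -> R) : (forall n, a n = b n) -> ex_series a -> ex_series b.
Proof. apply ex_series_ext. Qed.

Lemma kern_A2 beta t : Cmod t < 1 -> inA2 beta (kseq (beta + 1) t).
Proof.
  intros Ht. apply (Rex_ext (fun j => D (beta + 1) j * (Cmod t ^ 2) ^ j)).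
  - intro j. symmetry. unfold kseq. rewrite Cmod_mult, Cmod_pow, Cmod_R, Rabs_pos_eq by (left; apply D_pos).
    replace ((Cmod t ^ 2) ^ j) with ((Cmod t ^ j) ^ 2) by (rewrite <- !pow_mult; f_equal; lia).
    replace (wt beta j * (D (beta + 1) j * Cmod t ^ j) ^ 2) with
      ((wt beta j * D (beta + 1) j) * (D (beta + 1) j * (Cmod t ^ j) ^ 2)) by ring.
    rewrite wt_D. ring.
  - apply series_real. split. apply pow2_ge_0. pose proof (Cmod_ge_0 t). nra.
Qed.

Lemma CSeries_ext (a b : nat -> C) : (forall n, a n = b n) -> CSeries a = CSeries b.
Proof. intros H. unfold CSeries. f_equal; apply Series_ext; intro n; rewrite H; reflexivity. Qed.

Lemma ip_kern beta w v :
  ip beta (kseq (beta + 1) (Cconj w)) v = Cconj (eval v w).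
Proof.
  unfold ip, eval. rewrite <- CSeries_conj. apply CSeries_ext. intro j.
  unfold kseq. rewrite (pow_n_Cpow w j). rewrite Cmult_conj, Cpow_conj.
  transitivity (Cmult (Cmult (RtoC (wt beta j)) (RtoC (D (beta + 1) j))) (Cmult (Cpow (Cconj w) j) (Cconj (v j)))).
  ring. rewrite <- RtoC_mult, wt_D. ring.
Qed.

Lemma Cconj0 : Cconj (RtoC 0) = RtoC 0.
Proof. unfold Cconj, RtoC. simpl. rewrite Ropp_0. reflexivity. Qed.
Lemma Cconj1 : Cconj (RtoC 1) = RtoC 1.
Proof. unfold Cconj, RtoC. simpl. rewrite Ropp_0. reflexivity. Qed.

Lemma ip_mono beta g m : ip beta g (mono m) = Cmult (RtoC (wt beta m)) (g m).
Proof.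
  unfold ip. apply CSeries_is.
  set (a := fun n => Cmult (RtoC (wt beta n)) (Cmult (g n) (Cconj (mono m n)))).
  replace (Cmult (RtoC (wt beta m)) (g m)) with (a m).
  - apply single_is. intros j Hj. unfold a, mono. destruct (Nat.eqb_spec j m). lia.
    rewrite Cconj0. change (@eq C (Cmult (RtoC (wt beta j)) (Cmult (g j) (RtoC 0))) (RtoC 0)). ring.
  - unfold a, mono. rewrite Nat.eqb_refl. rewrite Cconj1. ring.
Qed.

Lemma eval_series s z l : Cis (fun j => Cmult (s j) (Cpow z j)) l -> eval s z = l.
Proof.
  intros H. unfold eval. apply CSeries_is. refine (Cis_ext _ _ _ _ H).
  intro n. reflexivity.
Qed.

Lemma eval_kern k t z : Cmod (Cmult t z) < 1 ->
  eval (kseq k t) z = Cinv (Cpow (Cminus (RtoC 1) (Cmult t z)) (S k)).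
Proof.
  intros H. apply eval_series. refine (Cis_ext _ _ _ _ (kern k _ H)).
  intro n. unfold kseq. rewrite Cpow_mult_l. ring.
Qed.

Lemma fin_series (s : nat -> C) z M : (forall j, (M < j)%nat -> s j = RtoC 0) ->
  Cis (fun j => Cmult (s j) (Cpow z j)) (sum_n (fun j => Cmult (s j) (Cpow z j)) M).
Proof.
  intros H. apply (@fin_is C_AbsRing C_NormedModule). intros j Hj. rewrite H by exact Hj.
  change (@eq C (Cmult (RtoC 0) (Cpow z j)) (RtoC 0)). ring.
Qed.

Lemma cm_sq x : Cmod x ^ 2 = fst x ^ 2 + snd x ^ 2.
Proof. apply Cmod2_alt. Qed.

Lemma cm_lt1 x : Cmod x < 1 -> fst x ^ 2 + snd x ^ 2 < 1.
Proof. intros H. rewrite <- cm_sq. pose proof (Cmod_ge_0 x). nra. Qed.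

Lemma cm_lt_of_sq x y : fst x ^ 2 + snd x ^ 2 < fst y ^ 2 + snd y ^ 2 -> Cmod x < Cmod y.
Proof.
  intros H. rewrite <- !cm_sq in H. pose proof (Cmod_ge_0 x). pose proof (Cmod_ge_0 y).
  destruct (Rlt_le_dec (Cmod x) (Cmod y)) as [h|h]. exact h.
  exfalso. assert (Cmod y * Cmod y <= Cmod x * Cmod x) by (apply Rmult_le_compat; lra). nra.
Qed.

Lemma Cmod_mult_lt1 x y : Cmod x < 1 -> Cmod y < 1 -> Cmod (Cmult x y) < 1.
Proof.
  intros Hx Hy. rewrite Cmod_mult. pose proof (Cmod_ge_0 x). pose proof (Cmod_ge_0 y). nra.
Qed.

Lemma Cconj_lt1 x : Cmod x < 1 -> Cmod (Cconj x) < 1.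
Proof. rewrite Cmod_conj. auto. Qed.

Lemma den_nz alpha z : Cmod alpha < 1 -> Cmod z < 1 -> Cminus (RtoC 1) (Cmult (Cconj alpha) z) <> RtoC 0.
Proof. intros Ha Hz. apply one_minus_nz. apply Cmod_mult_lt1; auto. apply Cconj_lt1; auto. Qed.

Lemma phi_disc alpha z : Cmod alpha < 1 -> Cmod z < 1 -> Cmod (phi alpha z) < 1.
Proof.
  intros Ha Hz. pose proof (den_nz alpha z Ha Hz) as Hd. unfold phi.
  rewrite Cmod_div by exact Hd. apply Rlt_div_l. apply Cmod_gt_0. exact Hd.
  rewrite Rmult_1_l. apply cm_lt_of_sq.
  apply cm_lt1 in Ha. apply cm_lt1 in Hz.
  destruct alpha as [a1 a2]. destruct z as [z1 z2]. simpl in *.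
  assert (0 < (1 - (a1 ^ 2 + a2 ^ 2)) * (1 - (z1 ^ 2 + z2 ^ 2))) by (apply Rmult_lt_0_compat; lra).
  nra.
Qed.

Lemma phi_invol alpha z : Cmod alpha < 1 -> Cmod z < 1 -> phi alpha (phi alpha z) = z.
Proof.
  intros Ha Hz. pose proof (den_nz alpha z Ha Hz) as Hd.
  assert (Hr : Cminus (RtoC 1) (Cmult (Cconj alpha) alpha) <> RtoC 0) by (apply den_nz; auto).
  assert (Hr2 : Cminus (Cminus (RtoC 1) (Cmult (Cconj alpha) z)) (Cmult (Cconj alpha) (Cminus alpha z)) <> RtoC 0).
  { intro E. apply Hr. rewrite <- E. ring. }
  unfold phi. field. auto.
Qed.

Lemma iterM_ext g N s t : (forall i, s i = t i) -> forall j, iterM g N s j = iterM g N t j.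
Proof.
  intros H. induction N; intro j. apply H.
  simpl. change (Mop g (iterM g N s) j = Mop g (iterM g N t) j). apply Mop_ext. exact IHN.
Qed.

Lemma pow_frac a X Y N : a <> RtoC 0 -> X <> RtoC 0 -> Y <> RtoC 0 ->
  Cmult (Cmult (Cinv (Cpow a N)) (Cpow Y N)) (Cinv (Cpow (Cdiv (Cmult X Y) a) N)) = Cinv (Cpow X N).
Proof.
  intros Ha HX HY. unfold Cdiv. rewrite !Cpow_mult_l, Cpow_inv by exact Ha.
  pose proof (Cpow_nz a N Ha). pose proof (Cpow_nz X N HX). pose proof (Cpow_nz Y N HY).
  field. auto.
Qed.

Lemma pow_frac2 r Y N : r <> RtoC 0 -> Y <> RtoC 0 ->
  Cinv (Cpow (Cdiv r Y) N) = Cmult (Cinv (Cpow r N)) (Cpow Y N).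
Proof.
  intros Hr HY. unfold Cdiv. rewrite !Cpow_mult_l, Cpow_inv by exact HY.
  pose proof (Cpow_nz r N Hr). pose proof (Cpow_nz Y N HY).
  field. auto.
Qed.

Lemma RtoC_conj r : Cconj (RtoC r) = RtoC r.
Proof. unfold Cconj, RtoC. simpl. rewrite Ropp_0. reflexivity. Qed.

Lemma kseq_conj k t j : Cconj (kseq k t j) = kseq k (Cconj t) j.
Proof. unfold kseq. rewrite Cmult_conj, RtoC_conj, Cpow_conj. reflexivity. Qed.

Lemma vn_formula beta alpha n vn z0 :
  Cmod alpha < 1 -> is_adj_comp beta alpha (mono n) vn -> Cmod z0 < 1 ->
  eval vn (phi alpha z0) =
  Cmult (RtoC (wt beta n))
    (Cmult (Cmult (Cinv (Cpow (Cminus (RtoC 1) (Cmult (Cconj alpha) alpha)) (S (beta + 1))))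
                  (Cpow (Cminus (RtoC 1) (Cmult (Cconj alpha) z0)) (S (beta + 1))))
           (iterM alpha (S (beta + 1)) (kseq (beta + 1) z0) n)).
Proof.
  intros Hal [_ Hadj] Hz0.
  set (N := S (beta + 1)).
  set (w := phi alpha z0).
  assert (Hw : Cmod w < 1) by (apply phi_disc; auto).
  set (a := Cminus (RtoC 1) (Cmult (Cconj w) alpha)).
  assert (Ha : a <> RtoC 0) by (apply one_minus_nz, Cmod_mult_lt1; auto; apply Cconj_lt1; auto).
  set (t := Cdiv (Cminus (Cconj alpha) (Cconj w)) a).
  assert (Hden : Cminus (RtoC 1) (Cmult (Cconj alpha) w) <> RtoC 0) by (apply den_nz; auto).
  assert (Ht_eq : t = Cconj (phi alpha w)).
  { unfold t, a, phi. rewrite Cdiv_conj by exact Hden.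
    rewrite !Cminus_conj, Cmult_conj, Cconj_conj, RtoC_conj.
    assert (Cminus (RtoC 1) (Cmult alpha (Cconj w)) <> RtoC 0).
    { intro E. apply Ha. unfold a. rewrite <- E. ring. }
    field. auto. }
  assert (Ht : Cmod t < 1) by (rewrite Ht_eq; apply Cconj_lt1; apply phi_disc; auto).
  assert (Htc : Cconj t = z0) by (rewrite Ht_eq, Cconj_conj; unfold w; apply phi_invol; auto).
  set (G := fun j => Cmult (Cinv (Cpow a N)) (iterM (Cconj alpha) N (kseq (beta + 1) t) j)).
  assert (H : ip beta (kseq (beta + 1) (Cconj w)) vn = ip beta G (mono n)).
  { apply Hadj.
    - apply kern_A2. apply Cconj_lt1; auto.
    - apply scal_A2. apply iterM_A2. apply kern_A2. exact Ht.
    - intros z Hz.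
      assert (Htz : Cmod (Cmult t z) < 1) by (apply Cmod_mult_lt1; auto).
      assert (Hpz : Cmod (phi alpha z) < 1) by (apply phi_disc; auto).
      assert (Hwp : Cmod (Cmult (Cconj w) (phi alpha z)) < 1) by (apply Cmod_mult_lt1; auto; apply Cconj_lt1; auto).
      rewrite eval_kern by exact Hwp.
      assert (HK : Cis (fun j => Cmult (kseq (beta + 1) t j) (Cpow z j)) (Cinv (Cpow (Cminus (RtoC 1) (Cmult t z)) N))).
      { refine (Cis_ext _ _ _ _ (kern (beta + 1) _ Htz)). intro j. unfold kseq. rewrite Cpow_mult_l. ring. }
      pose proof (Cis_scal (Cinv (Cpow a N)) _ _ (iterM_series (Cconj alpha) N _ z _ HK)) as HG.
      assert (HG' : Cis (fun j => Cmult (G j) (Cpow z j)) (Cmult (Cinv (Cpow a N)) (Cmult (Cpow (Cminus (RtoC 1) (Cmult (Cconj alpha) z)) N) (Cinv (Cpow (Cminus (RtoC 1) (Cmult t z)) N))))).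
      { refine (Cis_ext _ _ _ _ HG). intro j. unfold G. simpl. ring. }
      rewrite (eval_series G z _ HG').
      set (X := Cminus (RtoC 1) (Cmult (Cconj w) (phi alpha z))).
      set (Y := Cminus (RtoC 1) (Cmult (Cconj alpha) z)).
      assert (HX : X <> RtoC 0) by (apply one_minus_nz; exact Hwp).
      assert (HY : Y <> RtoC 0) by (apply den_nz; auto).
      assert (E : Cminus (RtoC 1) (Cmult t z) = Cdiv (Cmult X Y) a).
      { unfold X, Y, t, a, phi. field. auto. }
      rewrite E. change (S (beta + 1)) with N. rewrite <- (pow_frac a X Y N Ha HX HY). ring. }
  rewrite ip_kern, ip_mono in H.
  apply (f_equal Cconj) in H. rewrite Cconj_conj in H. fold w. rewrite H.
  unfold G. rewrite !Cmult_conj, RtoC_conj, Cinv_conj by (apply Cpow_nz; exact Ha).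
  rewrite Cpow_conj, iterM_conj, Cconj_conj.
  rewrite (iterM_ext alpha N _ (kseq (beta + 1) z0)).
  2:{ intro i. rewrite kseq_conj, Htc. reflexivity. }
  assert (Hca : Cconj a = Cdiv (Cminus (RtoC 1) (Cmult (Cconj alpha) alpha)) (Cminus (RtoC 1) (Cmult (Cconj alpha) z0))).
  { unfold a, w, phi. rewrite Cminus_conj, Cmult_conj, Cconj_conj, RtoC_conj.
    pose proof (den_nz alpha z0 Hal Hz0). field. auto. }
  rewrite Hca, pow_frac2. ring.
  apply den_nz; auto. apply den_nz; auto.
Qed.

Theorem lemma5p5 (beta : nat) (alpha : C) (n m : nat) (vn vm : nat -> C) :
  alpha <> RtoC 0 -> Cmod alpha < 1 ->
  is_adj_comp beta alpha (mono n) vn ->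
  is_adj_comp beta alpha (mono m) vm ->
  (n + beta + 3 <= m)%nat \/ (m + beta + 3 <= n)%nat ->
  ip beta vn vm = RtoC 0.
Proof.
  intros Hne Hal Hn Hm Hnm.
  set (N := S (beta + 1)).
  set (rho := Cminus (RtoC 1) (Cmult (Cconj alpha) alpha)).
  set (Q := fun j => if Nat.leb j n then Cmult (pw alpha N (n - j)) (RtoC (D (beta + 1) j)) else RtoC 0).
  set (kap := Cmult (RtoC (wt beta n)) (Cinv (Cpow rho N))).
  set (P := fun j => Cmult kap (iterM (Cconj alpha) N Q j)).
  assert (Hpw : forall k, (N < k)%nat -> pw alpha N k = RtoC 0).
  { intros k Hk. unfold pw. apply (iterM_supp alpha N (mono 0) 0 0).
    - intros j Hj. unfold mono. destruct (Nat.eqb_spec j 0). lia. reflexivity.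
    - lia. }
  assert (HQ : forall j, (j < n - N)%nat \/ (n < j)%nat -> Q j = RtoC 0).
  { intros j Hj. unfold Q. destruct (Nat.leb_spec j n).
    - rewrite Hpw by lia. ring.
    - reflexivity. }
  assert (HP : forall j, (j < n - N)%nat \/ (n + N < j)%nat -> P j = RtoC 0).
  { intros j Hj. unfold P. rewrite (iterM_supp (Cconj alpha) N Q (n - N) n HQ j Hj). ring. }
  assert (HPm : P m = RtoC 0) by (apply HP; unfold N; lia).
  destruct Hn as [HvnA Hadjn]. destruct Hm as [_ Hadjm].
  rewrite (Hadjm vn P HvnA).
  - rewrite ip_mono, HPm. ring.
  - apply (fin_A2 beta P (n + N)). intros j Hj. apply HP. lia.
  - intros z Hz. rewrite (vn_formula beta alpha n vn z Hal (conj HvnA Hadjn) Hz). fold N. fold rho.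
    assert (HQs : forall j, (n < j)%nat -> Q j = RtoC 0) by (intros; apply HQ; lia).
    pose proof (Cis_scal kap _ _ (iterM_series (Cconj alpha) N Q z _ (fin_series Q z n HQs))) as H1.
    assert (H2 : Cis (fun j => Cmult (P j) (Cpow z j))
       (Cmult kap (Cmult (Cpow (Cminus (RtoC 1) (Cmult (Cconj alpha) z)) N) (sum_n (fun j => Cmult (Q j) (Cpow z j)) n)))).
    { refine (Cis_ext _ _ _ _ H1). intro j. unfold P. ring. }
    rewrite (eval_series P z _ H2).
    rewrite (iterM_conv alpha N (kseq (beta + 1) z) n).
    rewrite (Csum_ext_loc (fun j => Cmult (Q j) (Cpow z j)) (fun j => Cmult (pw alpha N (n - j)) (kseq (beta + 1) z j))).
    + unfold kap. ring.
    + intros j Hj. unfold Q, kseq. destruct (Nat.leb_spec j n). ring. lia.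
Qed.
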